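(* Let $q$ be a prime and $k\in\mathbb{N}$. There is a positive constant $m'_{q,k}$ depending only on $q$ and $k$ such that for every $N\in\mathbb{N}$, the number of $k$-element subsets of $[N]^{\times}=\{\pm p_1^{e_1}p_2^{e_2}\cdots p_N^{e_N}: 0\le e_1,\ldots,e_N\le N\}$ that contain at least one perfect $q^{th}$ power is at most $m'_{q,k}\frac{N^{Nk}}{q^N}$.
   Context: $p_1<p_2<\cdots$ denote the primes in increasing order. A perfect $q^{th}$ power is an integer of the form $m^q$ with $m\in\mathbb{Z}$. *)

(* Defs.v *)
From mathcomp Require Import all_boot all_order all_algebra.
Set Implicit Arguments. Unset Strict Implicit. Unset Printing Implicit Defensive.
Import Order.TTheory GRing.Theory Num.Theory.

Lemma exists_prime_above (m : nat) : exists p, (m < p) && prime p.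
Proof. by have [p Hp Pp] := prime_above m; exists p; rewrite Hp Pp. Qed.

Definition next_prime (m : nat) : nat := ex_minn (exists_prime_above m).

(* nth_prime i = p_{i+1} : nth_prime 0 = 2, nth_prime 1 = 3, ... *)
Definition nth_prime (i : nat) : nat := iter i next_prime 2.

(* The element  s * p_1^{e_1} ... p_N^{e_N}  (s = -1 if b, else +1),
   with exponent vector e : 'I_N -> 'I_(N+1) (so 0 <= e_i <= N). *)
Definition elt_val (N : nat) (x : bool * {ffun 'I_N -> 'I_N.+1}) : int :=
  ((-1) ^+ x.1 * (\prod_(i < N) (nth_prime i) ^ (x.2 i : nat))%:Z)%R.

Definition signedbox (N : nat) : seq int :=
  undup [seq elt_val x | x : bool * {ffun 'I_N -> 'I_N.+1}].

Definition perfect_pow (q : nat) (x : int) : Prop := exists m : int, x = (m ^+ q)%R.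

(* Main.v *)
Require Import Defs.
From mathcomp Require Import all_boot all_order all_algebra.
From mathcomp Require Import zify.
Import Order.TTheory GRing.Theory Num.Theory.


Lemma aux1 N j : j <= N -> (N.+1)^j * N^2 <= N^j * (N^2 + j*N + j^2).
Proof.
elim: j => [|j IH] hj; first by rewrite !expn0; lia.
have IH' := IH (ltnW hj).
have h2 : (N^2 + j*N + j^2) * N.+1 <= N * (N^2 + j.+1*N + j.+1^2).
  rewrite !expnS !expn0; nia.
rewrite expnS [N^j.+1]expnS.
move: IH' h2; set a := N.+1^j; set b := N^j; set X := (N^2 + j*N + j^2);
  set Y := (N^2 + j.+1*N + j.+1^2); set c := N^2 => h1 h2.
apply: (@leq_trans (N.+1 * (b * X))); first by rewrite -mulnA; exact: leq_mul (leqnn _) h1.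
have -> : N.+1 * (b * X) = b * (X * N.+1) by lia.
have -> : N * b * Y = b * (N * Y) by lia.
by rewrite leq_mul2l h2 orbT.
Qed.

Lemma aux2 N : (N.+1)^N <= 3 * N^N.
Proof.
case: N => [|N]; first by [].
have := @aux1 N.+1 N.+1 (leqnn N.+1).
set a := N.+2 ^ N.+1; set b := N.+1 ^ N.+1.
have -> : (N.+1 ^ 2 + N.+1 * N.+1 + N.+1 ^ 2) = 3 * N.+1^2 by rewrite !expnS expn0; lia.
by rewrite mulnCA mulnA leq_pmul2r ?expn_gt0.
Qed.

Lemma expn_mono m n e : m <= n -> m ^ e <= n ^ e.
Proof. by move=> h; elim: e => [|e IH] //; rewrite !expnS leq_mul. Qed.

Lemma aux3 N q : (N + q) * N^q <= (N.+1)^q * N.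
Proof.
elim: q => [|q IH]; first by rewrite addn0 !expn0 mul1n muln1.
have h : N ^ q.+1 <= N.+1^q * N by rewrite expnSr leq_mul2r expn_mono ?leqnSn ?orbT.
rewrite addnS expnS mulSn mulnCA.
apply: (@leq_trans (N * (N.+1 ^ q * N) + N.+1^q * N)).
  by rewrite addnC leq_add // ?leq_mul2l ?IH ?orbT // -expnS.
by rewrite [N.+1 ^ q.+1]expnS; lia.
Qed.

Lemma aux4 N q : (N + q)^N <= 3^q * N^N.
Proof.
case: N => [|N]; first by rewrite !expn0 muln1 expn_gt0.
have h := aux3 N.+1 q.
have h1 : ((N.+1 + q) ^ N.+1) * (N.+1 ^ q)^N.+1 <= (N.+2 ^ q)^N.+1 * N.+1^N.+1.
  by rewrite -!expnMn leq_exp2r.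
have h2 : (N.+2 ^ q)^N.+1 <= 3^q * (N.+1 ^ q)^N.+1.
  by rewrite -!expnM mulnC !expnM -expnMn expn_mono // aux2.
have : ((N.+1 + q) ^ N.+1) * (N.+1 ^ q)^N.+1 <= 3 ^ q * N.+1 ^ N.+1 * (N.+1 ^ q)^N.+1.
  apply: (leq_trans h1); rewrite mulnAC leq_mul2r h2 orbT //.
by rewrite leq_pmul2r ?expn_gt0.
Qed.

Lemma next_prime_spec m : (m < next_prime m) && prime (next_prime m).
Proof. by rewrite /next_prime; case: ex_minnP. Qed.

Lemma nth_prime_prime i : prime (nth_prime i).
Proof.
case: i => [|i] //=; by case/andP: (next_prime_spec (iter i next_prime 2)).
Qed.

Lemma nth_prime_lt i j : i < j -> nth_prime i < nth_prime j.
Proof.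
apply: (homo_ltn ltn_trans) => n.
by rewrite /nth_prime iterS; case/andP: (next_prime_spec (iter n next_prime 2)).
Qed.

Lemma nth_prime_inj : injective nth_prime.
Proof.
move=> i j h; case: (ltngtP i j) => // hij.
  by have := @nth_prime_lt _ _ hij; rewrite h ltnn.
by have := @nth_prime_lt _ _ hij; rewrite h ltnn.
Qed.

Lemma logn_prod N (e : 'I_N -> nat) (j : 'I_N) :
  logn (nth_prime j) (\prod_(i < N) nth_prime i ^ e i) = e j.
Proof.
have pj := nth_prime_prime j.
have /andP[r0 /eqP rl] : (0 < \prod_(i < N | i != j) nth_prime i ^ e i) &&
   (logn (nth_prime j) (\prod_(i < N | i != j) nth_prime i ^ e i) == 0).
  apply: (big_ind (fun x => (0 < x) && (logn (nth_prime j) x == 0))) => //; first by rewrite logn1.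
    move=> x y /andP[x0 /eqP lx] /andP[y0 /eqP ly].
    by rewrite muln_gt0 x0 y0 lognM // lx ly.
  move=> i hij; rewrite expn_gt0 prime_gt0 ?nth_prime_prime //=.
  have hne : nth_prime j != nth_prime i.
    apply/eqP => hh; have hji := @nth_prime_inj _ _ hh.
    have : j == i by apply/eqP; apply: val_inj.
    by rewrite eq_sym (negbTE hij).
  by rewrite lognX logn_prime ?nth_prime_prime // (negbTE hne) muln0.
rewrite (bigD1 j) //= lognM; [|by rewrite expn_gt0 prime_gt0|by []].
by rewrite pfactorK // rl addn0.
Qed.

Definition gq (q N : nat) (x : bool * {ffun 'I_N -> 'I_(N %/ q).+1}) : int :=
  elt_val (x.1, [ffun i => (inord (q * x.2 i) : 'I_N.+1)]).

Lemma pp_codom q N (x : bool * {ffun 'I_N -> 'I_N.+1}) : 0 < q ->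
  perfect_pow q (elt_val x) -> elt_val x \in codom (gq q N).
Proof.
case: x => b e q0 [m hm].
have habs : (\prod_(i < N) nth_prime i ^ e i) = (`|m|%N ^ q)%N.
  have := congr1 absz hm; rewrite /elt_val /= abszM !abszX /= exp1n mul1n //.
have he j : (e j : nat) = q * logn (nth_prime j) `|m|%N.
  by rewrite -(@logn_prod N (fun i => (e i : nat)) j) habs lognX.
apply/codomP; exists (b, [ffun j => (inord (e j %/ q) : 'I_(N %/ q).+1)]).
rewrite /gq /=; congr elt_val; congr pair; apply/ffunP => j; rewrite !ffunE.
apply: val_inj => /=.
have hq : e j %/ q < (N %/ q).+1 by rewrite ltnS leq_div2r // -ltnS ltn_ord.
have hd : q * (e j %/ q) = e j by rewrite he mulKn.
by rewrite (inordK hq) hd inordK // ltn_ord.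
Qed.

Lemma final_arith N q k P S F : F <= P * S ^ k -> P <= 2 * (N %/ q).+1 ^ N ->
  S <= 2 * N.+1 ^ N -> F * q ^ N <= 2 ^ k.+1 * 3 ^ (q + k.+1) * N ^ (N * k.+1).
Proof.
move=> hF hP hS.
have h1 : (N %/ q).+1 ^ N * q ^ N <= 3 ^ q * N ^ N.
  rewrite -expnMn; apply: leq_trans (aux4 N q); apply: expn_mono.
  by rewrite mulSn addnC leq_add2r leq_divM.
have h2 : S ^ k <= 2 ^ k * 3 ^ k * N ^ (N * k).
  apply: (@leq_trans ((2 * N.+1 ^ N) ^ k)); first exact: expn_mono.
  rewrite expnMn -mulnA leq_mul2l; apply/orP; right.
  by rewrite mulnC expnM -expnMn expn_mono // mulnC aux2.
move: h1 h2 hP hF; set D := (N %/ q).+1 ^ N; set Q := q ^ N; set Sk := S ^ k.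
set NN := N ^ N; set NNk := N ^ (N * k) => h1 h2 hP hF.
apply: (leq_trans (leq_mul hF (leqnn Q))).
apply: (@leq_trans (2 * D * Sk * Q)); first by rewrite leq_mul2r leq_mul2r hP !orbT.
have -> : 2 * D * Sk * Q = 2 * (D * Q) * Sk by lia.
apply: (leq_trans (leq_mul (leq_mul (leqnn 2) h1) h2)).
rewrite expnS expnD expnS mulnS expnD -/NN -/NNk.
set a := 2 ^ k; set b := 3 ^ q; set c := 3 ^ k.
nia.
Qed.

Theorem lemma2 (q k : nat) (hq : prime q) :
  exists m : rat, (0 < m)%R /\
    forall (N : nat) (F : {set {set 'I_(size (signedbox N))}}),
      (forall A, A \in F <->
         (#|A| = k /\ exists i, i \in A /\ perfect_pow q (nth 0%R (signedbox N) i))) ->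
      ((#|F|)%:R <= m * (N ^ (N * k))%:R / (q ^ N)%:R :> rat)%R.
Proof.
have q0 : 0 < q := prime_gt0 hq.
exists (((2 ^ k * 3 ^ (q + k))%N)%:R)%R; split.
  by rewrite ltr0n muln_gt0 !expn_gt0.
move=> N F HF.
have Q0 : (0 < (q ^ N)%:R :> rat)%R by rewrite ltr0n expn_gt0 q0.
rewrite ler_pdivlMr // -!natrM ler_nat.
case: k HF => [|k] HF.
  have -> : F = set0.
    apply/setP => A; rewrite in_set0; apply/negbTE/negP => /HF [/eqP].
    by rewrite cards_eq0 => /eqP -> [i []]; rewrite in_set0.
  by rewrite cards0.
set sb := signedbox N.
set Pw := [set i : 'I_(size sb) | nth 0%R sb i \in codom (gq q N)].
have hPw : #|Pw| <= 2 * (N %/ q).+1 ^ N.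
  apply: (@leq_trans (size (codom (gq q N)))); last first.
    by rewrite size_codom card_prod card_bool card_ffun !card_ord.
  have hsz : #|Pw| = size [seq nth 0%R sb (val i) | i <- enum Pw] by rewrite size_map cardE.
  rewrite hsz; apply: uniq_leq_size.
    rewrite map_inj_in_uniq ?enum_uniq // => i j _ _ h; apply: val_inj.
    have usb : uniq sb := undup_uniq _.
    by apply: (uniqP 0%R usb) => //; apply: ltn_ord.
  by move=> y /mapP [i]; rewrite mem_enum inE => hi ->.
have hS : size sb <= 2 * N.+1 ^ N.
  rewrite /sb /signedbox; apply: leq_trans (size_undup _) _.
  by rewrite size_map -cardE card_prod card_bool card_ffun !card_ord.
have hsub : F \subset [set p.1 |: [set x in (tval p.2)] |
                       p : 'I_(size sb) * k.-tuple 'I_(size sb) in setX Pw [set: k.-tuple 'I_(size sb)]].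
  apply/subsetP => A /HF [hA [i [hiA hpp]]].
  have hi : i \in Pw.
    rewrite inE; have : nth 0%R sb i \in sb by rewrite mem_nth.
    rewrite /sb /signedbox mem_undup => /mapP [x _ hx].
    by rewrite hx; apply: pp_codom => //; rewrite -hx.
  have hs : size (enum (A :\ i)) == k.
    by rewrite -cardE; move: (cardsD1 i A); rewrite hiA hA add1n => -[<-].
  apply/imsetP; exists (i, Tuple hs); first by rewrite in_setX hi in_setT.
  by rewrite /= set_enum setD1K.
apply: final_arith hPw hS.
apply: (leq_trans (subset_leq_card hsub)); apply: (leq_trans (leq_imset_card _ _)).
by rewrite cardsX cardsT card_tuple card_ord.
Qed.
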